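(* Let $q\ge2$ be even, $n\ge1$, $k\in[1,n]$, $V\subseteq\Sigma_q^n$ and $\boldsymbol{x}\in V$. Let $N_k(\boldsymbol{x};V)=\{\boldsymbol{z}\in V:\boldsymbol{z}\ne\boldsymbol{x},\ RC_k^1(\boldsymbol{z})\cap RC_k^1(\boldsymbol{x})\ne\varnothing\}$. Then $\#N_k(\boldsymbol{x};V)\le n(n-k+1)-1$.
   Context: $\Sigma_q=\{0,\dots,q-1\}$. A complement operation is a fixed bijection $a\mapsto\overline{a}$ on $\Sigma_q$ with $\overline{a}\ne a$, $\overline{\overline{a}}=a$; $\boldsymbol{v}^{RC}=\overline{v_k}\cdots\overline{v_1}$ for $\boldsymbol{v}=v_1\cdots v_k$. For $\boldsymbol{x}=\boldsymbol{u}\boldsymbol{v}\boldsymbol{w}\in\Sigma_q^n$ with $|\boldsymbol{u}|=i-1$, $|\boldsymbol{v}|=k$, $RC_{k,i}(\boldsymbol{x})=\boldsymbol{u}\boldsymbol{v}\boldsymbol{v}^{RC}\boldsymbol{w}$, and $RC_k^1(\boldsymbol{x})=\{RC_{k,i}(\boldsymbol{x}):i\in[1,n-k+1]\}$. *)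

(* Defs.v *)
From mathcomp Require Import all_boot.
Set Implicit Arguments. Unset Strict Implicit. Unset Printing Implicit Defensive.

(* Alphabet Sigma_q = 'I_q; words are sequences (seq 'I_q).
   A complement operation: an involution without fixed points. *)
Definition is_complement (q : nat) (c : 'I_q -> 'I_q) : Prop :=
  (forall a, c a != a) /\ (forall a, c (c a) = a).

Definition revcomp (q : nat) (c : 'I_q -> 'I_q) (v : seq 'I_q) : seq 'I_q :=
  rev (map c v).

(* RC_{k,i}(x) with i 1-based (i in [1, n-k+1]): x = u v w, |u| = i-1, |v| = k,
   result u v v^{RC} w. *)
Definition RC (q : nat) (c : 'I_q -> 'I_q) (k i : nat) (x : seq 'I_q) : seq 'I_q :=
  let u := take i.-1 x in
  let v := take k (drop i.-1 x) in
  let w := drop (i.-1 + k) x in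
  u ++ v ++ revcomp c v ++ w.

Definition in_RC1 (q : nat) (c : 'I_q -> 'I_q) (n k : nat) (x y : seq 'I_q) : bool :=
  [exists i : 'I_(n - k + 1), y == RC c k i.+1 x].

Definition RC1_meet (q : nat) (c : 'I_q -> 'I_q) (n k : nat) (z x : seq 'I_q) : bool :=
  [exists i : 'I_(n - k + 1), in_RC1 c n k x (RC c k i.+1 z)].

Definition Nk (q : nat) (c : 'I_q -> 'I_q) (n k : nat)
  (V : {set n.-tuple 'I_q}) (x : n.-tuple 'I_q) : {set n.-tuple 'I_q} :=
  [set z in V | (z != x) && RC1_meet c n k z x].

(* Main.v *)
Require Import Defs.
From mathcomp Require Import all_boot.
From mathcomp Require Import zify.
Set Implicit Arguments.

Definition recz (q : nat) (k i : nat) (y : seq 'I_q) : seq 'I_q :=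
  take (i + k) y ++ drop (i + k + k) y.

Lemma recz_RC (q : nat) (c : 'I_q -> 'I_q) (n k i : nat) (z : seq 'I_q) :
  size z = n -> i + k <= n -> recz k i (RC c k i.+1 z) = z.
Proof.
move=> hs hik; rewrite /recz /RC /= /revcomp.
have h1 : size (take i z) = i by rewrite size_take; case: ltnP => //; lia.
have h2 : size (take k (drop i z)) = k by rewrite size_take size_drop; case: ltnP => //; lia.
have h3 : size (rev (map c (take k (drop i z)))) = k by rewrite size_rev size_map.
rewrite catA take_cat size_cat h1 h2 ltnn subnn take0 cats0.
rewrite drop_cat size_cat h1 h2 ltnNge leq_addr /= addKn.
rewrite drop_cat h3 ltnn subnn drop0.
by rewrite -takeD cat_take_drop.
Qed.

Theorem lemma6 (q : nat) (c : 'I_q -> 'I_q) (n k : nat)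
  (V : {set n.-tuple 'I_q}) (x : n.-tuple 'I_q) :
  2 <= q -> ~~ odd q -> is_complement c ->
  1 <= n -> 1 <= k <= n -> x \in V ->
  #|Nk c k V x| <= n * (n - k + 1) - 1.
Proof.
move=> _ _ _ hn /andP [hk1 hkn] _.
set m := n - k + 1.
pose P := [pred p : 'I_m * 'I_m | p.1 != p.2].
pose s2 := [seq recz k (p.1 : nat) (RC c k (p.2 : nat).+1 x) | p : 'I_m * 'I_m <- enum P].
have hsub : {subset map val (enum (Nk c k V x)) <= s2}.
  move=> s /mapP [z]; rewrite mem_enum inE => /andP [_ /andP [zx /existsP [i /existsP [j /eqP hij]]]] ->.
  have hi : (i : nat) + k <= n by have := ltn_ord i; rewrite /m; lia.
  have hj : (j : nat) + k <= n by have := ltn_ord j; rewrite /m; lia.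
  have ez : val z = recz k i (RC c k j.+1 x) by rewrite -hij (@recz_RC _ c n k i z (size_tuple z) hi).
  apply/mapP; exists (i, j) => //.
  rewrite mem_enum inE /=; apply/negP => /eqP eij.
  move: zx; rewrite -val_eqE ez -eij (@recz_RC _ c n k i x (size_tuple x) hi) eqxx //.
have hu : uniq (map val (enum (Nk c k V x))) by rewrite (map_inj_uniq val_inj) enum_uniq.
have := uniq_leq_size hu hsub.
rewrite size_map -cardE size_map -cardE => hle.
apply: (leq_trans hle).
have hP : #|P| + #|predC P| = m * m by rewrite cardC card_prod card_ord.
have hD : #|predC P| = m.
  have hdg : predC P =i [set (i, i) | i : 'I_m].
    case=> a b; rewrite !inE /=; apply/idP/idP.
      by rewrite negbK => /eqP <-; apply/imsetP; exists a.
    by case/imsetP => i _ [-> ->]; rewrite negbK.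
  rewrite (eq_card hdg).
  by rewrite card_imset ?card_ord // => a b [].
have hP' : #|P| = m * m - m by lia.
rewrite hP'.
have [t ht] : exists t, n = k + t by exists (n - k); lia.
have hmt : m = t + 1 by rewrite /m ht; lia.
rewrite hmt ht; nia.
Qed.
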